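(* Let $t,w,w',n,g$ be positive integers. If there exists a Steiner system $\mathrm{S}(t,w',n)$ and a generalized Steiner system $\mathrm{GS}(t,w,w',g)$, then there exists a generalized Steiner system $\mathrm{GS}(t,w,n,g)$.
   Context: A Steiner system $\mathrm{S}(t,k,n)$ is a pair $(X,\mathcal{B})$ with $|X|=n$ and $\mathcal{B}$ a family of $k$-subsets (blocks) of $X$ such that every $t$-subset of $X$ is contained in exactly one block. For a set $Y$ of size $m$ (e.g. $Y=[m]$), let $X=Y\times[g]$ with groups $G_y=\{y\}\times[g]$, $y\in Y$. An H-design $\mathrm{H}(m,g,w,t)$ on this set is a family $\mathcal{A}$ of $w$-subsets (blocks) of $X$, each meeting every group in at most one point, such that each $t$-subset of $X$ whose points lie in $t$ distinct groups is contained in exactly one block. Each block $\{(y_1,a_1),\dots,(y_w,a_w)\}$ is identified with the word of length $m$ over $\{0\}\cup[g]$ (indexed by $Y$) having entry $a_s$ at coordinate $y_s$ and $0$ elsewhere. A generalized Steiner system $\mathrm{GS}(t,w,m,g)$ is an H-design $\mathrm{H}(m,g,w,t)$ such that any two distinct blocks, viewed as words, have Hamming distance at least $2(w-t)+1$. *)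

(* Defs.v *)
From mathcomp Require Import all_boot all_order all_algebra.
Set Implicit Arguments. Unset Strict Implicit. Unset Printing Implicit Defensive.

Definition steiner_system (t k n : nat) (B : {set {set 'I_n}}) : Prop :=
  (forall b, b \in B -> #|b| = k) /\
  (forall T : {set 'I_n}, #|T| = t -> #|[set b in B | T \subset b]| = 1).

(* Point set X = Y x [g] with Y = 'I_m; the group of a point x is x.1. *)
Definition hpoint (m g : nat) := ('I_m * 'I_g)%type.

Definition transversal (m g : nat) (A : {set hpoint m g}) : Prop :=
  forall x y, x \in A -> y \in A -> x.1 = y.1 -> x = y.

Definition H_design (m g w t : nat) (D : {set {set hpoint m g}}) : Prop :=
  (forall b, b \in D -> #|b| = w /\ transversal b) /\
  (forall T : {set hpoint m g}, #|T| = t -> transversal T ->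
     #|[set b in D | T \subset b]| = 1).

(* The word of a block: coordinate y carries Some a if (y,a) is in the block,
   None (playing the role of the symbol 0) otherwise. *)
Definition word (m g : nat) (b : {set hpoint m g}) (y : 'I_m) : option 'I_g :=
  [pick a | (y, a) \in b].

Definition hamming (m g : nat) (b1 b2 : {set hpoint m g}) : nat :=
  #|[set y : 'I_m | word b1 y != word b2 y]|.

Definition GS (t w m g : nat) (D : {set {set hpoint m g}}) : Prop :=
  @H_design m g w t D /\
  (forall b1 b2, b1 \in D -> b2 \in D -> b1 != b2 ->
     (2 * (w%:Z - t%:Z) + 1 <= (hamming b1 b2)%:Z)%R).

(* Main.v *)
Require Import Defs.
From mathcomp Require Import all_boot all_order all_algebra.
From mathcomp Require Import zify.
Set Implicit Arguments. Unset Strict Implicit. Unset Printing Implicit Defensive.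

Definition phi (n w' : nat) (x0 : 'I_n) (b : {set 'I_n}) (i : 'I_w') : 'I_n :=
  nth x0 (enum b) i.
Definition Fm (n w' g : nat) (x0 : 'I_n) (b : {set 'I_n}) (p : hpoint w' g)
  : hpoint n g := (@phi _ w' x0 b p.1, p.2).
Definition supp (m g : nat) (c : {set hpoint m g}) : {set 'I_m} := [set x.1 | x in c].

Lemma phi_inj n w' (x0 : 'I_n) (b : {set 'I_n}) : #|b| = w' -> injective (@phi _ w' x0 b).
Proof.
move=> Hb i j /eqP; rewrite /phi nth_uniq ?enum_uniq // -?cardE ?Hb //.
by move/eqP/val_inj.
Qed.

Lemma phi_in n w' (x0 : 'I_n) (b : {set 'I_n}) i : #|b| = w' -> @phi _ w' x0 b i \in b.
Proof.
move=> Hb; rewrite /phi -mem_enum; apply: mem_nth; by rewrite -cardE Hb.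
Qed.

Lemma phi_onto n w' (x0 : 'I_n) (b : {set 'I_n}) z : #|b| = w' -> z \in b ->
  exists i : 'I_w', @phi _ w' x0 b i = z.
Proof.
move=> Hb Hz.
have Hi : index z (enum b) < w' by rewrite -Hb cardE index_mem mem_enum.
exists (Ordinal Hi); by rewrite /phi /= nth_index ?mem_enum.
Qed.

Lemma Fm_inj n w' g (x0 : 'I_n) (b : {set 'I_n}) : #|b| = w' -> injective (@Fm n w' g x0 b).
Proof.
move=> Hb [y a] [y' a'] [] /(phi_inj Hb) -> ->. by [].
Qed.

Lemma word_Fm n w' g (x0 : 'I_n) (b : {set 'I_n}) (d : {set hpoint w' g}) y : #|b| = w' ->
  word (Fm x0 b @: d) (@phi _ w' x0 b y) = word d y.
Proof.
move=> Hb; rewrite /word; apply: eq_pick => a /=.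
rewrite -[(@phi _ w' x0 b y, a)]/(Fm x0 b (y, a)) mem_imset //; exact: Fm_inj.
Qed.

Lemma supp_Fm n w' g (x0 : 'I_n) (b : {set 'I_n}) (d : {set hpoint w' g}) : #|b| = w' ->
  supp (Fm x0 b @: d) \subset b.
Proof.
move=> Hb; apply/subsetP => z /imsetP [x /imsetP [y Hy ->] ->]; exact: phi_in.
Qed.

Lemma word_some m g (c : {set hpoint m g}) z : z \in supp c -> word c z != None.
Proof.
case/imsetP => x Hx ->; rewrite /word; case: pickP => // /(_ x.2).
by rewrite -surjective_pairing Hx.
Qed.

Lemma word_none m g (c : {set hpoint m g}) z : z \notin supp c -> word c z = None.
Proof.
move=> Hz; rewrite /word; case: pickP => // a Ha.
by case/negP: Hz; apply/imsetP; exists (z, a).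
Qed.

Lemma card_supp m g (c : {set hpoint m g}) : Defs.transversal c -> #|supp c| = #|c|.
Proof.
move=> Hc; rewrite card_in_imset // => x y Hx Hy; exact: Hc.
Qed.

Lemma subset_card (T : finType) (A : {set T}) k : k <= #|A| ->
  exists X : {set T}, X \subset A /\ #|X| = k.
Proof.
move=> Hk; exists [set x in take k (enum A)]; split.
  by apply/subsetP => x; rewrite inE => /mem_take; rewrite mem_enum.
rewrite cardsE.
have /card_uniqP -> : uniq (take k (enum A)) by rewrite take_uniq // enum_uniq.
by rewrite size_takel // -cardE.
Qed.

Theorem lemma3p1 (t w w' n g : nat) :
  0 < t -> 0 < w -> 0 < w' -> 0 < n -> 0 < g ->
  (exists B : {set {set 'I_n}}, @steiner_system t w' n B) ->
  (exists D : {set {set hpoint w' g}}, @GS t w w' g D) ->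
  exists D : {set {set hpoint n g}}, @GS t w n g D.
Proof.
move=> t0 w0 w'0 n0 g0 [B [HBk HBt]] [D [[HDb HDt] HDd]].
pose x0 : 'I_n := Ordinal n0.
exists [set (Fm x0 b @: d) | b : {set 'I_n} in B, d : {set hpoint w' g} in D].
have HB2 : forall b1 b2, b1 \in B -> b2 \in B -> b1 != b2 -> #|b1 :&: b2| < t.
  move=> b1 b2 Hb1 Hb2 Nb; rewrite ltnNge; apply/negP => Ht.
  have [X [HX HXt]] := subset_card Ht.
  have /eqP/cards1P [b Hb] := HBt X HXt.
  have : b1 \in [set b in B | X \subset b].
    by rewrite inE Hb1 (subset_trans HX) // subsetIl.
  have : b2 \in [set b in B | X \subset b].
    by rewrite inE Hb2 (subset_trans HX) // subsetIr.
  rewrite Hb !inE => /eqP E2 /eqP E1.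
  by rewrite E1 E2 eqxx in Nb.
split; [split|].
- move=> c /imset2P [b d Hb Hd ->]. split.
  + rewrite card_imset; [exact: (HDb d Hd).1 | exact: Fm_inj (HBk b Hb)].
  + move=> x y /imsetP [x' Hx' ->] /imsetP [y' Hy' ->] /= E.
    have E' : x'.1 = y'.1 := phi_inj (HBk b Hb) E.
    by rewrite ((HDb d Hd).2 x' y' Hx' Hy' E').
- move=> T HT HTt.
  pose Tp := [set x.1 | x in T].
  have HTp : #|Tp| = t by rewrite card_in_imset // => x y Hx Hy; exact: HTt.
  have /eqP/cards1P [b0 Hb0] := HBt Tp HTp.
  have : b0 \in [set b in B | Tp \subset b] by rewrite Hb0 set11.
  rewrite inE => /andP [Hb0B HTpb0].
  have Hb0k := HBk b0 Hb0B.
  pose Tq := @Fm n w' g x0 b0 @^-1: T.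
  have HTqT : Fm x0 b0 @: Tq = T.
    apply/setP => x; apply/imsetP/idP.
    - by case=> y; rewrite inE => Hy ->.
    - move=> Hx. have : x.1 \in b0 by apply: (subsetP HTpb0); apply/imsetP; exists x.
      case/(phi_onto x0 Hb0k) => i Hi. exists (i, x.2).
        by rewrite inE /Fm /= Hi -surjective_pairing.
      by rewrite /Fm /= Hi -surjective_pairing.
  have HTq : #|Tq| = t by rewrite -HT -HTqT card_imset //; exact: Fm_inj.
  have HTqt : Defs.transversal Tq.
    move=> x y; rewrite !inE => Hx Hy E. apply: (@Fm_inj _ _ _ x0 _ Hb0k). apply: HTt => //.
    by rewrite /= E.
  have /eqP/cards1P [d0 Hd0] := HDt Tq HTq HTqt.
  have : d0 \in [set d in D | Tq \subset d] by rewrite Hd0 set11.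
  rewrite inE => /andP [Hd0D HTqd0].
  apply/eqP/cards1P; exists (Fm x0 b0 @: d0); apply/setP => c; rewrite !inE.
  apply/andP/eqP.
  + case=> /imset2P [b d Hb Hd ->] HTc.
    have Hbk := HBk b Hb.
    have : b \in [set b in B | Tp \subset b].
      rewrite inE Hb /=. apply/subsetP => z /imsetP [x Hx ->].
      have := subsetP HTc x Hx. case/imsetP => y Hy ->. exact: phi_in.
    rewrite Hb0 inE => /eqP Eb. subst b.
    have : d \in [set d in D | Tq \subset d].
      rewrite inE Hd /=. apply/subsetP => y; rewrite inE => Hy.
      have := subsetP HTc _ Hy. by rewrite mem_imset //; exact: Fm_inj.
    by rewrite Hd0 inE => /eqP ->.
  + move=> ->. split; first by apply/imset2P; exists b0 d0.
    rewrite -HTqT; exact: imsetS.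
- move=> c1 c2 /imset2P [b1 d1 Hb1 Hd1 ->] /imset2P [b2 d2 Hb2 Hd2 ->] Hne.
  have Hb1k := HBk b1 Hb1. have Hb2k := HBk b2 Hb2.
  case: (eqVneq b1 b2) => [Eb | Nb].
  + subst b2. have Nd : d1 != d2 by apply: contraNneq Hne => ->.
    apply: Order.POrderTheory.le_trans (HDd d1 d2 Hd1 Hd2 Nd) _. rewrite lez_nat.
    rewrite /hamming -(card_imset _ (phi_inj (x0:=x0) Hb1k)). apply: subset_leq_card.
    apply/subsetP => z /imsetP [y]; rewrite !inE => Hy ->. by rewrite !word_Fm.
  + set e1 := Fm x0 b1 @: d1; set e2 := Fm x0 b2 @: d2.
    have Htr : forall b d, b \in B -> d \in D -> Defs.transversal (Fm x0 b @: d).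
      move=> b d Hb Hd x y /imsetP [x' Hx' ->] /imsetP [y' Hy' ->] /= E.
      have E' : x'.1 = y'.1 := phi_inj (HBk b Hb) E.
      by rewrite ((HDb d Hd).2 x' y' Hx' Hy' E').
    have Hc1 : #|supp e1| = w.
      rewrite card_supp; last exact: Htr. by rewrite /e1 card_imset; [exact: (HDb d1 Hd1).1 | exact: Fm_inj].
    have Hc2 : #|supp e2| = w.
      rewrite card_supp; last exact: Htr. by rewrite /e2 card_imset; [exact: (HDb d2 Hd2).1 | exact: Fm_inj].
    have Hk : #|supp e1 :&: supp e2| < t.
      apply: leq_ltn_trans (HB2 _ _ Hb1 Hb2 Nb).
      by apply: subset_leq_card; apply: setISS; apply: supp_Fm.
    have Hh : #|supp e1 :\: supp e2| + #|supp e2 :\: supp e1| <= hamming e1 e2.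
      rewrite -cardsUI.
      have -> : (supp e1 :\: supp e2) :&: (supp e2 :\: supp e1) = set0.
        apply/setP => z; rewrite !inE.
        by case: (z \in supp e1); case: (z \in supp e2); rewrite ?andbF.
      rewrite cards0 addn0; apply: subset_leq_card; apply/subsetP => z.
      rewrite !inE => /orP [] /andP [Hz1 Hz2].
      * rewrite (word_none Hz1); exact: word_some.
      * rewrite (word_none Hz1) eq_sym; exact: word_some.
    move: Hh; rewrite !cardsD Hc1 Hc2 [supp e2 :&: _]setIC => Hh.
    move: Hk Hh; set k := #|_ :&: _|; set h := hamming _ _ => Hk Hh.
    lia.
Qed.
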